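(* Let $T$ be a tree on $n\geq 4$ vertices. Then the node reliability polynomial $\mathrm{nRel}(T;p)$ has at least one point of inflection in $(0,1)$ (a point in $(0,1)$ at which the second derivative changes sign).
   Context: For a graph $G$ on $n$ vertices, a connected set is a nonempty vertex subset $C$ such that the induced subgraph $G[C]$ is connected. The node reliability of $G$ is the polynomial \[ \mathrm{nRel}(G;p)=\sum_{C}p^{|C|}(1-p)^{n-|C|}, \] the sum over all connected sets $C$ of $G$. *)

(* Defs.v *)
From HB Require Import structures.
From mathcomp Require Import all_boot all_order all_algebra.
From mathcomp Require Import reals.
Set Implicit Arguments. Unset Strict Implicit. Unset Printing Implicit Defensive.
Import Order.TTheory GRing.Theory Num.Theory.

Definition simple_graph (T : finType) (e : rel T) : Prop :=
  symmetric e /\ irreflexive e.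

Definition graph_connected (T : finType) (e : rel T) : Prop :=
  forall x y : T, connect e x y.

Definition acyclic (T : finType) (e : rel T) : Prop :=
  ~ (exists s : seq T, [/\ 3 <= size s, uniq s & cycle e s]).

Definition is_tree (T : finType) (e : rel T) : Prop :=
  [/\ simple_graph e, graph_connected e & acyclic e].

Definition induced (T : finType) (e : rel T) (C : {set T}) : rel T :=
  [rel x y | [&& e x y, x \in C & y \in C]].

Definition connected_set (T : finType) (e : rel T) (C : {set T}) : bool :=
  (C != set0) && [forall x in C, forall y in C, connect (induced e C) x y].

Local Open Scope ring_scope.

Definition nRel (R : ringType) (T : finType) (e : rel T) : {poly R} :=
  \sum_(C : {set T} | connected_set e C)
     'X ^+ #|C| * (1 - 'X) ^+ (#|T| - #|C|)%N.

Definition inflection_point (R : realType) (f : {poly R}) (x : R) : Prop :=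
  exists2 eps : R, 0 < eps &
    ((forall y, x - eps < y < x -> (f^`(2)).[y] < 0) /\
     (forall y, x < y < x + eps -> (f^`(2)).[y] > 0)) \/
    ((forall y, x - eps < y < x -> (f^`(2)).[y] > 0) /\
     (forall y, x < y < x + eps -> (f^`(2)).[y] < 0)).

(* Main.v *)
Require Import Defs.
From HB Require Import structures.
From mathcomp Require Import all_boot all_order all_algebra.
From mathcomp Require Import reals.
From mathcomp Require Import polyrcf lra ring zify.
From Stdlib Require Import Classical_Prop.
Import Order.TTheory GRing.Theory Num.Theory.
Local Open Scope ring_scope.

Section SC.
Variable R : rcfType.
Implicit Types p : {poly R}.

Lemma left_free p a y : p != 0 -> a < y ->
  exists2 z, a <= z < y & forall w, z < w < y -> ~~ root p w.
Proof.
move=> p0 ay; exists (prev_root p a y).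
  move: (prev_root_in p a y); rewrite (min_l (ltW ay)) in_itv /= => /andP[-> _].
  by rewrite prev_root_lt.
by move=> w hw; have := @prev_noroot _ p a y w; rewrite in_itv /= hw; apply.
Qed.

Lemma sign_change p a b : a < b -> p.[a] < 0 -> 0 < p.[b] ->
  exists2 x, a < x < b & exists2 eps : R, 0 < eps &
    (forall y, x - eps < y < x -> p.[y] < 0) /\
    (forall y, x < y < x + eps -> p.[y] > 0).
Proof.
move=> ab pa pb.
have p0 : p != 0 by apply: contraTneq pa => ->; rewrite horner0 ltxx.
suff H : forall N (s : seq R) a b, (size p - size s <= N)%N -> uniq s ->
   all (root p) s -> (forall r, r \in s -> ~~ (a < r < b)) ->
   a < b -> p.[a] < 0 -> 0 < p.[b] ->
  exists2 x, a < x < b & exists2 eps : R, 0 < eps &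
    (forall y, x - eps < y < x -> p.[y] < 0) /\
    (forall y, x < y < x + eps -> p.[y] > 0).
  by apply: (H (size p) [::]) => //; rewrite subn0.
elim=> [|N IH] s {pb pa ab}a {}b hN us rs sout ab pa pb.
  have := max_poly_roots p0 rs us; rewrite -subn_gt0.
  by rewrite leqn0 in hN; rewrite (eqP hN).
case: (prev_rootP p a b) => [pz|y _ py0 hy hno|c _ _ hno].
- by rewrite pz eqxx in p0.
- have {}hy : a < y < b by rewrite in_itv /= in hy.
  case/andP: (hy) => ay yb.
  have pos : forall w, y < w < b -> 0 < p.[w].
    move=> w /andP[yw wb]; rewrite ltNge; apply/negP => pw.
    have [r] := polyrcf.poly_ivt (ltW wb) (mulr_le0_ge0 pw (ltW pb)).
    rewrite in_itv /= => /andP[wr rb] rr.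
    have rb' : r != b by apply: contraTneq rr => ->; rewrite rootE gt_eqF.
    have := hno r; rewrite in_itv /= (lt_le_trans yw wr).
    by rewrite lt_neqAle rb' rb rr => /(_ isT).
  have [z /andP[az zy] hz] := @left_free p a y p0 ay.
  set m := (z + y) / 2.
  have zm : z < m by rewrite /m ltr_pdivlMr // mulrDr mulr1 ltrD2l.
  have my : m < y by rewrite /m ltr_pdivrMr // mulrDr mulr1 ltrD2r.
  have pm : p.[m] != 0 by have := hz m; rewrite zm my => /(_ isT); rewrite rootE.
  case: (ltrgtP p.[m] 0) pm => // pm _.
  + exists y => //; exists (Num.min (y - z) (b - y)).
      by rewrite lt_min !subr_gt0 zy yb.
    split=> w /andP[hw1 hw2].
    * have zw : z < w.
        have hmin : Num.min (y - z) (b - y) <= y - z by rewrite ge_min lexx.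
        move: hw1 hmin; set u := Num.min _ _ => hw1 hmin; lra.
      clear hw1; rewrite ltNge; apply/negP => pw.
      case: (lerP m w) => [mw|wm].
        have [r] := polyrcf.poly_ivt mw (mulr_le0_ge0 (ltW pm) pw).
        rewrite in_itv /= => /andP[mr rw].
        by rewrite (negPf (hz r _)) // (lt_le_trans zm mr) (le_lt_trans rw hw2).
      have [r] := polyrcf.poly_ivt (ltW wm) (mulr_ge0_le0 pw (ltW pm)).
      rewrite in_itv /= => /andP[wr rm].
      by rewrite (negPf (hz r _)) // (lt_le_trans zw wr) (le_lt_trans rm my).
    * apply: pos; rewrite hw1 /=.
      have hmin : Num.min (y - z) (b - y) <= b - y by rewrite ge_min lexx orbT.
      move: hw2 hmin; set u := Num.min _ _ => hw2 hmin; lra.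
  + have h1 : (size p - size (y :: s) <= N)%N.
      by rewrite /= subnS -ltnS (leq_trans _ hN) // prednK // subn_gt0 max_poly_roots.
    have h2 : uniq (y :: s).
      rewrite /= us andbT; apply/negP => /sout; by rewrite hy.
    have h3 : all (root p) (y :: s) by rewrite /= rs andbT rootE py0.
    have h4 : forall r, r \in y :: s -> ~~ (a < r < m).
      move=> r; rewrite inE => /orP[/eqP->|/sout].
        by rewrite negb_and (lt_gtF my) orbT.
      apply: contra => /andP[-> rm] /=; exact: lt_trans rm (lt_trans my yb).
    have [x /andP[ax xm] hx] := IH (y :: s) a m h1 h2 h3 h4 (le_lt_trans az zm) pa pm.
    exists x; first by rewrite ax /= (lt_trans xm (lt_trans my yb)).
    exact: hx.
- have pab : p.[a] * p.[b] < 0 by rewrite pmulr_llt0.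
  have [r hr rr] := poly_ivtoo (ltW ab) pab.
  by move: (hno r hr); rewrite rr.
Qed.
End SC.

Section Terms.
Variable R : comNzRingType.
Variable n : nat.
Definition tt (k : nat) : {poly R} := 'X ^+ k * (1 - 'X) ^+ (n - k)%N.

Lemma coefB01 m : ((1 - 'X : {poly R}) ^+ m)`_0 = 1 /\ ((1 - 'X : {poly R}) ^+ m)`_1 = - m%:R.
Proof.
elim: m => [|m [h0 h1]]; first by rewrite expr0 !coef1 /= oppr0; split.
rewrite exprS mulrBl mul1r !coefB !coefXM /= h0 h1 subr0; split => //.
by rewrite -natr1 opprD addrC.
Qed.

Lemma tt0 k : (0 < k)%N -> (tt k).[0] = 0.
Proof. by case: k => // k _; rewrite /tt !hornerE expr0n /= mul0r. Qed.

Lemma tt1 k : (tt k).[1] = ((n - k)%N == 0%N)%:R.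
Proof. by rewrite /tt !hornerE expr1n mul1r subrr expr0n. Qed.

Lemma ttd1 k : (tt k)^`().[1] = (if (n - k)%N == 0%N then k%:R else 0) - ((n - k)%N == 1%N)%:R.
Proof.
rewrite /tt derivM derivXn deriv_exp derivB derivC derivX sub0r.
have h : (1 - 'X : {poly R}).[1] = 0 by rewrite hornerD hornerN hornerX hornerC subrr.
rewrite !(hornerD, hornerM, hornerMn, hornerXn, horner_exp, h, hornerN, hornerC, expr1n, mul1r).
rewrite hornerX subrr.
case: (n - k)%N => [|[|m]] /=.
- by rewrite !expr0 mulr1 mulr0n addr0 subr0.
- by rewrite expr1 expr0 mulr0 add0r mulr1 sub0r.
- by rewrite !expr0n /= !mulr0 mul0rn addr0 subr0.
Qed.

Lemma tt2 k : (0 < k)%N -> (tt k)`_2 = (k == 1%N)%:R * - (n - 1)%:R + (k == 2%N)%:R.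
Proof.
rewrite /tt coefXnM; case: k => [|[|[|k]]] //= _.
- by rewrite mul1r addr0; case: (coefB01 (n - 1)).
- by rewrite mul0r add0r; case: (coefB01 (n - 2)).
- by rewrite mul0r addr0.
Qed.
End Terms.

Section G.
Variables (T : finType) (e : rel T).

Lemma conn_setT : graph_connected e -> (0 < #|T|)%N -> connected_set e setT.
Proof.
move=> hc hT; apply/andP; split.
  by apply/set0Pn; case/card_gt0P: hT => x _; exists x; rewrite in_setT.
apply/forall_inP => x _; apply/forall_inP => y _.
rewrite (@eq_connect _ _ e); first exact: hc.
by move=> u v; rewrite /induced /= !in_setT !andbT.
Qed.

Lemma conn_set1 x : connected_set e [set x].
Proof.
apply/andP; split; first by apply/set0Pn; exists x; rewrite inE.
apply/forall_inP => u; rewrite inE => /eqP->; apply/forall_inP => v.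
by rewrite inE => /eqP->; apply: connect0.
Qed.

Lemma conn_card C : connected_set e C -> (0 < #|C|)%N.
Proof. by case/andP => h _; rewrite card_gt0. Qed.

Lemma path_induced C x q : path (induced e C) x q -> all (mem C) q /\ path e x q.
Proof.
elim: q x => [//|y q IH] x /= /andP[/and3P[exy _ yC] /IH[h1 h2]].
by rewrite yC h1 exy h2.
Qed.

Lemma cut_vertex : is_tree e -> (2 < #|T|)%N ->
  exists v, ~~ connected_set e (setT :\ v).
Proof.
case=> [[esym eirr] hc hac] hT.
apply/existsP; rewrite -negb_forall; apply/negP; move/forallP => H.
have Hc v x y : x != v -> y != v -> connect (induced e (setT :\ v)) x y.
  move=> xv yv; case/andP: (H v) => _ /forall_inP /(_ x) + .
  by rewrite !inE xv => /(_ isT) /forall_inP /(_ y); rewrite !inE yv; apply.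
have [x [y [z [_ [xy yz zx]]]]] := card_gt2P hT.
have [b eab hb] : exists2 b, e x b & b != x.
  case/connectP: (hc x y) => p px ly.
  case: p px ly => [/= _ yx|b p /= /andP[exb _] _]; first by rewrite yx eqxx in xy.
  by exists b => //; apply: contraTneq exb => ->; rewrite eirr.
have [c cx cb] : exists2 c, c != x & c != b.
  case: (eqVneq b y) => [->|by_]; first by exists z => //; rewrite eq_sym.
  by exists y; rewrite // eq_sym.
have [w [ebw wx wb]] : exists w, [/\ e b w, w != x & w != b].
  case/connectP: (Hc x b c hb cx) => p pp lc.
  case: p pp lc => [/= _ cb'|w p /= /andP[/and3P[ebw _ wC] _] _].
    by rewrite cb' eqxx in cb.
  exists w; split => //; first by move: wC; rewrite !inE andbT.
  by apply: contraTneq ebw => ->; rewrite eirr.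
have bx : x != b by rewrite eq_sym.
case/connectP: (Hc b x w bx wb) => p pp lw.
case/shortenP: pp lw => q qp uq sub lw.
have [qC qe] := path_induced _ _ _ qp.
apply: hac; exists (b :: x :: q); split.
- case: q {qp uq sub qC qe} lw => [/= wx'|? ? _] //.
  by rewrite -wx' eqxx in wx.
- rewrite [uniq _]/= -[_ && uniq q]/(uniq (x :: q)) uq andbT inE negb_or hb /=; apply/negP => bq.
  by have := allP qC b bq; rewrite !inE eqxx.
- rewrite /cycle /= (esym b x) eab /= rcons_path qe /= -lw esym ebw.
  done.
Qed.
End G.

Lemma sum_ind (R : nzSemiRingType) (I : finType) (P Q : pred I) :
  \sum_(i | P i) ((Q i)%:R : R) = (#|[set i | P i && Q i]|)%:R.
Proof.
rewrite -sum1dep_card natr_sum big_mkcondr /=; apply: eq_bigr => i _.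
by case: (Q i).
Qed.

Theorem theorem3p2 (R : realType) (T : finType) (e : rel T) :
  is_tree e -> (4 <= #|T|)%N ->
  exists2 x : R, 0 < x < 1 & inflection_point (nRel R e) x.
Proof.
move=> htree hn.
have [[esym eirr] hc hac] := htree.
set n := #|T| in hn.
set P := nRel R e.
have hP : P = \sum_(C | connected_set e C) tt R n #|C| by [].
have hT : connected_set e setT by apply: conn_setT => //; rewrite /n in hn; lia.
have hlt : forall C : {set T}, C != setT -> (#|C| < n)%N.
  by move=> C hC; rewrite /n -cardsT proper_card // properT.
have P0 : P.[0] = 0.
  rewrite hP horner_sum big1 // => C hC; apply: tt0; exact: conn_card hC.
have P1 : P.[1] = 1.
  rewrite hP horner_sum (bigD1 setT) //= tt1 cardsT subnn eqxx big1 ?addr0 //.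
  move=> C /andP[_ hC]; rewrite tt1; have := hlt C hC.
  by rewrite -subn_gt0 => /lt0n_neq0 /negbTE ->.
have Pd1 : 1 <= P^`().[1].
  rewrite hP raddf_sum horner_sum.
  under eq_bigr do rewrite ttd1.
  rewrite sumrB sum_ind (bigD1 setT) //= cardsT subnn eqxx big1 ?addr0; last first.
    move=> C /andP[_ hC]; have := hlt C hC.
    by rewrite -subn_gt0 => /lt0n_neq0 /negbTE ->.
  have [v hv] := @cut_vertex T e htree (leq_trans (isT : (2 < 4)%N) hn).
  set S := [set _ | _].
  have hS : (#|S| < n)%N.
    have -> : n = #|[set C : {set T} | #|C| == n.-1]|.
      have bn : forall m, (0 < m)%N -> 'C(m, m.-1) = m by case=> // m _; rewrite binSn.
      by rewrite card_draws -/n bn //; lia.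
    apply: proper_card; apply/properP; split.
      apply/subsetP => C; rewrite !inE => /andP[_ /eqP h]; apply/eqP; lia.
    exists (setT :\ v); rewrite !inE; last by rewrite (negbTE hv).
    have := cardsD1 v setT; rewrite in_setT cardsT -/n; lia.
  by rewrite lerBrDr addrC natr1 ler_nat.
have Pd2 : (P^`(2)).[0] < 0.
  rewrite horner_coef0 coef_derivn addn0 hP coef_sum.
  rewrite (eq_bigr (fun C : {set T} => (#|C| == 1%N)%:R * - (n - 1)%:R + (#|C| == 2%N)%:R : R)); last first.
    by move=> C hC; rewrite tt2 //; exact: conn_card hC.
  rewrite big_split /= -mulr_suml !sum_ind.
  set S1 := [set _ | _]; set S2 := [set _ | _].
  have e1 : S1 = [set C : {set T} | #|C| == 1%N].
    apply/setP => C; rewrite !inE; case: (boolP (#|C| == 1%N)); rewrite ?andbF ?andbT //.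
    by case/cards1P => x ->; rewrite conn_set1.
  have c1 : #|S1| = n by rewrite e1 card_draws bin1.
  have c2 : (#|S2| <= 'C(n, 2))%N.
    rewrite -card_draws; apply: subset_leq_card; apply/subsetP => C.
    by rewrite !inE => /andP[].
  have b2 : ('C(n, 2) * 2 = n * (n - 1))%N.
    by rewrite -[2%N]/(2`!) bin_ffact ffactnSr ffactn1.
  rewrite c1 pmulrn_llt0 // mulrN addrC subr_lt0 -natrM ltr_nat.
  rewrite /n in hn c2 b2 *; nia.
have D0 : P^`(2) != 0 by apply: contraTneq Pd2 => ->; rewrite horner0 ltxx.
have [b /andP[b0 b1] Pb] : exists2 b : R, 0 < b < 1 & 0 < (P^`(2)).[b].
  apply: NNPP => Hno.
  have Hle : forall y : R, 0 < y < 1 -> (P^`(2)).[y] <= 0.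
    move=> y hy; rewrite leNgt; apply/negP => hpos; apply: Hno; by exists y.
  have [c hcm Pc] := poly_mvt P (ltr01 : (0 : R) < 1).
  move: hcm; rewrite in_itv /= => /andP[c0 c1].
  rewrite P0 P1 subr0 mulr1 in Pc.
  have [z /andP[cz z1] hz] := @left_free R (P^`(2)) c 1 D0 c1.
  set y := (z + 1) / 2.
  have zy : z < y by rewrite /y ltr_pdivlMr // mulrDr mulr1 ltrD2l.
  have y1 : y < 1 by rewrite /y ltr_pdivrMr // mulrDr mulr1 ltrD2r.
  have cy : c < y by apply: le_lt_trans zy.
  have [d hd Pd] := poly_mvt P^`() cy.
  move: hd; rewrite in_itv /= => /andP[cd dy].
  have [d' hd' Pd'] := poly_mvt P^`() y1.
  move: hd'; rewrite in_itv /= => /andP[yd' d'1].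
  have h1 : (P^`(2)).[d] <= 0 by apply: Hle; rewrite (lt_trans c0 cd) (lt_trans dy y1).
  have h2 : (P^`(2)).[d'] < 0.
    rewrite lt_neqAle Hle ?(lt_trans (lt_trans c0 cy) yd') ?d'1 // andbT.
    by have := hz d'; rewrite (lt_trans zy yd') d'1 rootE => /(_ isT).
  have : (P^`()).[1] < (P^`()).[y].
    by rewrite -subr_lt0 Pd' pmulr_llt0 // subr_gt0.
  have : (P^`()).[y] <= (P^`()).[c].
    by rewrite -subr_le0 Pd pmulr_lle0 // subr_gt0.
  rewrite -Pc => ha hb; have := lt_le_trans hb ha; rewrite ltNge Pd1 //.
have [x /andP[x0 xb] [eps eps0 [hl hr]]] := @sign_change R (P^`(2)) 0 b b0 Pd2 Pb.
exists x; first by rewrite x0 (lt_trans xb b1).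
by exists eps => //; left; split.
Qed.
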